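(* Let $A$ be an Archimedean semiprime $f$-algebra which is Dedekind complete. Then every intermediate algebra in $A$ (i.e., every subalgebra of $A$ containing $A_b$) is an order ideal of $A$. In particular, every intermediate algebra in $A$ is a Dedekind complete semiprime $f$-algebra.
   Context: An $f$-algebra is a real associative algebra that is a vector lattice with $A_+A_+\subseteq A_+$ and such that $a\wedge b=0$ implies $ac\wedge b=ca\wedge b=0$ for all $c\in A_+$; it is semiprime if $0$ is its only nilpotent element. $A_b=\{a\in A: a^2\le\mu|a|\text{ for some }\mu\in(0,\infty)\}$ is the set of bounded elements. An order ideal is a solid vector subspace. *)

(* Defs.v *)
(* Every structural notion is relative to a carrier predicate D : A -> Prop,
   so that it can be applied both to A itself (D = full) and to a subset
   B of A equipped with the induced operations and order. *)
From mathcomp Require Import all_boot all_order all_algebra.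
From mathcomp Require Import reals.
Set Implicit Arguments. Unset Strict Implicit. Unset Printing Implicit Defensive.
Import Order.TTheory GRing.Theory Num.Theory.
Local Open Scope ring_scope.

Section FAlgebras.
Variables (R : realType) (A : lmodType R).

Definition full : A -> Prop := fun _ => True.

Section Ops.
Variables (mul : A -> A -> A) (le : A -> A -> Prop) (meet join : A -> A -> A).

Definition is_subspace (D : A -> Prop) : Prop :=
  D 0 /\ (forall x y, D x -> D y -> D (x + y)) /\
  (forall (c : R) x, D x -> D (c *: x)).

Definition is_assoc_algebra (D : A -> Prop) : Prop :=
  is_subspace D /\
  (forall x y, D x -> D y -> D (mul x y)) /\
  (forall x y z, D x -> D y -> D z -> mul x (mul y z) = mul (mul x y) z) /\
  (forall x y z, D x -> D y -> D z -> mul (x + y) z = mul x z + mul y z) /\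
  (forall x y z, D x -> D y -> D z -> mul x (y + z) = mul x y + mul x z) /\
  (forall (c : R) x y, D x -> D y -> mul (c *: x) y = c *: mul x y) /\
  (forall (c : R) x y, D x -> D y -> mul x (c *: y) = c *: mul x y).

Definition is_ordered_vspace (D : A -> Prop) : Prop :=
  is_subspace D /\
  (forall x, D x -> le x x) /\
  (forall x y, D x -> D y -> le x y -> le y x -> x = y) /\
  (forall x y z, D x -> D y -> D z -> le x y -> le y z -> le x z) /\
  (forall x y z, D x -> D y -> D z -> le x y -> le (x + z) (y + z)) /\
  (forall (c : R) x, D x -> 0 <= c -> le 0 x -> le 0 (c *: x)).

Definition is_lattice_ops (D : A -> Prop) : Prop :=
  (forall x y, D x -> D y ->
     D (meet x y) /\ le (meet x y) x /\ le (meet x y) y /\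
     (forall z, D z -> le z x -> le z y -> le z (meet x y))) /\
  (forall x y, D x -> D y ->
     D (join x y) /\ le x (join x y) /\ le y (join x y) /\
     (forall z, D z -> le x z -> le y z -> le (join x y) z)).

Definition is_vector_lattice (D : A -> Prop) : Prop :=
  is_ordered_vspace D /\ is_lattice_ops D.

Definition is_f_algebra (D : A -> Prop) : Prop :=
  is_assoc_algebra D /\ is_vector_lattice D /\
  (forall x y, D x -> D y -> le 0 x -> le 0 y -> le 0 (mul x y)) /\
  (forall a b c, D a -> D b -> D c -> meet a b = 0 -> le 0 c ->
     meet (mul a c) b = 0 /\ meet (mul c a) b = 0).

(* npow a n = a^(n+1) *)
Fixpoint npow (a : A) (n : nat) : A :=
  match n with O => a | S m => mul a (npow a m) end.

Definition nilpotent (a : A) : Prop := exists n : nat, npow a n = 0.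

Definition semiprime (D : A -> Prop) : Prop :=
  forall a, D a -> nilpotent a -> a = 0.

Definition archimedean (D : A -> Prop) : Prop :=
  forall x y, D x -> D y -> le 0 x -> (forall n : nat, le (x *+ n) y) -> x = 0.

Definition is_ub (D S : A -> Prop) (u : A) : Prop :=
  D u /\ forall x, S x -> le x u.

Definition is_sup (D S : A -> Prop) (s : A) : Prop :=
  is_ub D S s /\ forall u, is_ub D S u -> le s u.

Definition dedekind_complete (D : A -> Prop) : Prop :=
  forall S : A -> Prop, (forall x, S x -> D x) -> (exists x, S x) ->
    (exists u, is_ub D S u) -> exists s, is_sup D S s.

Definition absv (x : A) : A := join x (- x).

(* A_b = {a : a^2 <= mu |a| for some mu in (0, oo)} *)
Definition bounded_elt (a : A) : Prop :=
  exists mu : R, 0 < mu /\ le (mul a a) (mu *: absv a).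

Definition is_subalgebra (B : A -> Prop) : Prop :=
  is_subspace B /\ (forall x y, B x -> B y -> B (mul x y)).

Definition intermediate_algebra (B : A -> Prop) : Prop :=
  is_subalgebra B /\ (forall a, bounded_elt a -> B a).

Definition order_ideal (B : A -> Prop) : Prop :=
  is_subspace B /\ (forall a b, B b -> le (absv a) (absv b) -> B a).

End Ops.
End FAlgebras.
Arguments full {R A}.

(* Main.v *)
Require Import Defs.
From mathcomp Require Import all_boot all_order all_algebra.
From mathcomp Require Import reals.
From mathcomp Require Import ring lra.
Set Implicit Arguments. Unset Strict Implicit. Unset Printing Implicit Defensive.
Import Order.TTheory GRing.Theory Num.Theory.
Local Open Scope ring_scope.

Section Main.
Variables (R : realType) (A : lmodType R) (mul : A -> A -> A) (le : A -> A -> Prop)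
  (meet join : A -> A -> A).
Hypothesis Hrefl : forall x, le x x.
Hypothesis Hanti : forall x y, le x y -> le y x -> x = y.
Hypothesis Htrans : forall x y z, le x y -> le y z -> le x z.
Hypothesis Hadd : forall x y z, le x y -> le (x + z) (y + z).
Hypothesis Hscale : forall (c : R) x, 0 <= c -> le 0 x -> le 0 (c *: x).
Hypothesis Hmeet : forall x y, le (meet x y) x /\ le (meet x y) y /\
  (forall z, le z x -> le z y -> le z (meet x y)).
Hypothesis Hjoin : forall x y, le x (join x y) /\ le y (join x y) /\
  (forall z, le x z -> le y z -> le (join x y) z).

Lemma lt_sub x y : le x y <-> le 0 (y - x).
Proof.
split=> h.
  by have := Hadd (-x) h; rewrite subrr.
by have := Hadd x h; rewrite add0r subrK.
Qed.

Lemma subge0 x y : le x y -> le 0 (y - x). Proof. exact: (proj1 (lt_sub x y)). Qed.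
Lemma ge0sub x y : le 0 (y - x) -> le x y. Proof. exact: (proj2 (lt_sub x y)). Qed.

Lemma le_addl x y z : le x y -> le (z + x) (z + y).
Proof. by move=> h; rewrite ![z + _]addrC; apply: Hadd. Qed.

Lemma le_add2 x y z w : le x y -> le z w -> le (x + z) (y + w).
Proof.
move=> h1 h2; apply: (Htrans (Hadd z h1)); exact: le_addl.
Qed.

Lemma le_opp x y : le x y -> le (- y) (- x).
Proof. by move/lt_sub=> h; apply/lt_sub; rewrite opprK addrC. Qed.

Lemma le_oppE x y : le (- y) (- x) <-> le x y.
Proof. split; last exact: le_opp. by move/le_opp; rewrite !opprK. Qed.

Lemma le_scale2 (c : R) x y : 0 <= c -> le x y -> le (c *: x) (c *: y).
Proof.
move=> c0 /lt_sub h; apply/lt_sub; rewrite -scalerBr; exact: Hscale.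
Qed.

Lemma le_scale_r (c d : R) x : c <= d -> le 0 x -> le (c *: x) (d *: x).
Proof.
move=> cd x0; apply/lt_sub; rewrite -scalerBl; apply: Hscale => //.
by rewrite subr_ge0.
Qed.

Lemma le_addr_ge0 x y : le 0 y -> le x (x + y).
Proof. by move=> h; have := le_addl x h; rewrite addr0. Qed.

Lemma le_subr_ge0 x y : le 0 y -> le (x - y) x.
Proof. by move=> h; apply/lt_sub; rewrite opprB addrCA subrr addr0. Qed.

Lemma ge0_add x y : le 0 x -> le 0 y -> le 0 (x + y).
Proof. by move=> h1 h2; have := le_add2 h1 h2; rewrite addr0. Qed.

Lemma le_half x : le 0 (x + x) -> le 0 x.
Proof.
move=> h; have c0 : (0:R) <= (1 + 1)^-1 by rewrite invr_ge0 addr_ge0.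
have := Hscale c0 h.
have -> : x + x = (1 + 1 : R) *: x by rewrite scalerDl scale1r.
rewrite scalerA mulVf ?scale1r //.
by rewrite (_ : (1 + 1 : R) = 2%:R) // pnatr_eq0.
Qed.

Lemma meet_l x y : le (meet x y) x. Proof. by case: (Hmeet x y). Qed.
Lemma meet_r x y : le (meet x y) y. Proof. by case: (Hmeet x y) => _ []. Qed.
Lemma meet_glb x y z : le z x -> le z y -> le z (meet x y).
Proof. by case: (Hmeet x y) => _ [] _; apply. Qed.
Lemma join_l x y : le x (join x y). Proof. by case: (Hjoin x y). Qed.
Lemma join_r x y : le y (join x y). Proof. by case: (Hjoin x y) => _ []. Qed.
Lemma join_lub x y z : le x z -> le y z -> le (join x y) z.
Proof. by case: (Hjoin x y) => _ [] _; apply. Qed.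

Ltac lat := first [apply: meet_l | apply: meet_r | apply: join_l | apply: join_r].

Lemma meetC x y : meet x y = meet y x.
Proof. by apply: Hanti; apply: meet_glb; lat. Qed.
Lemma joinC x y : join x y = join y x.
Proof. by apply: Hanti; apply: join_lub; lat. Qed.
Lemma meetxx x : meet x x = x.
Proof. by apply: Hanti; [apply: meet_l | apply: meet_glb]. Qed.

Lemma meet_le x y x' y' : le x x' -> le y y' -> le (meet x y) (meet x' y').
Proof.
move=> h1 h2; apply: meet_glb.
  exact: Htrans (meet_l _ _) h1.
exact: Htrans (meet_r _ _) h2.
Qed.

Lemma join_le x y x' y' : le x x' -> le y y' -> le (join x y) (join x' y').
Proof.
move=> h1 h2; apply: join_lub.
  exact: Htrans h1 (join_l _ _).
exact: Htrans h2 (join_r _ _).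
Qed.

Lemma joinD x y z : join x y + z = join (x + z) (y + z).
Proof.
apply: Hanti.
  have h : forall w, le (w + z) (join (x + z) (y + z)) -> le w (join (x + z) (y + z) - z).
    by move=> w /(Hadd (-z)); rewrite addrK.
  have := join_lub (h _ (join_l _ _)) (h _ (join_r _ _)).
  by move/(Hadd z); rewrite subrK.
by apply: join_lub; apply: Hadd; lat.
Qed.

Lemma meetD x y z : meet x y + z = meet (x + z) (y + z).
Proof.
apply: Hanti.
  by apply: meet_glb; apply: Hadd; lat.
have h : forall w, le (meet (x + z) (y + z)) (w + z) -> le (meet (x + z) (y + z) - z) w.
  by move=> w /(Hadd (-z)); rewrite addrK.
have := meet_glb (h _ (meet_l _ _)) (h _ (meet_r _ _)).
by move/(Hadd z); rewrite subrK.
Qed.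

Lemma oppr_join x y : - join x y = meet (- x) (- y).
Proof.
apply: Hanti.
  by apply: meet_glb; apply: le_opp; lat.
apply/le_oppE; rewrite opprK; apply: join_lub; apply/le_oppE; rewrite opprK.
  exact: meet_l.
exact: meet_r.
Qed.

Lemma oppr_meet x y : - meet x y = join (- x) (- y).
Proof. by rewrite -[x]opprK -[y]opprK -oppr_join !opprK. Qed.

Lemma add_join_meet x y : x + y = join x y + meet x y.
Proof.
apply: (addIr (- join x y)); rewrite [join x y + _]addrC addrK.
rewrite oppr_join addrC meetD addrA addNr add0r [x + y]addrC addrA addNr add0r meetC //.
Qed.


Definition pos x := join x 0.
Definition neg x := join (- x) 0.
Local Notation abs x := (absv join x).

Lemma pos_ge0 x : le 0 (pos x). Proof. exact: join_r. Qed.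
Lemma neg_ge0 x : le 0 (neg x). Proof. exact: join_r. Qed.
Lemma le_pos x : le x (pos x). Proof. exact: join_l. Qed.

Lemma neg_pos x : neg x = pos (- x). Proof. by []. Qed.

Lemma neg_meet x : neg x = - meet x 0.
Proof. by rewrite oppr_meet oppr0. Qed.

Lemma pos_sub_neg x : pos x - neg x = x.
Proof. by rewrite neg_meet opprK /pos -add_join_meet addr0. Qed.

Lemma neg_eq x : neg x = pos x - x.
Proof. by rewrite -{3}(pos_sub_neg x) opprB addrCA subrr addr0. Qed.

Lemma pos_eq x : pos x = x + neg x.
Proof. by rewrite neg_eq addrCA subrr addr0. Qed.

Lemma pos_neg_dis x : meet (pos x) (neg x) = 0.
Proof.
rewrite neg_eq.
have -> : meet (pos x) (pos x - x) = meet 0 (-x) + pos x by rewrite meetD add0r addrC.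
by rewrite -{1}oppr0 -oppr_join joinC addNr.
Qed.


Lemma le_abs x : le x (abs x). Proof. exact: join_l. Qed.
Lemma le_absN x : le (- x) (abs x). Proof. exact: join_r. Qed.

Lemma abs_ge0 x : le 0 (abs x).
Proof.
apply: le_half; have := le_add2 (le_abs x) (le_absN x); by rewrite subrr.
Qed.

Lemma abs_le x w : le (abs x) w <-> le x w /\ le (- x) w.
Proof.
split.
  by move=> h; split; apply: Htrans h; [apply: le_abs | apply: le_absN].
by case=> h1 h2; apply: join_lub.
Qed.

Lemma absN x : abs (- x) = abs x.
Proof. by rewrite /absv opprK joinC. Qed.

Lemma oppr_le0 x : le 0 x -> le (- x) 0.
Proof. by move/le_opp; rewrite oppr0. Qed.

Lemma oppr_ge0 x : le x 0 -> le 0 (- x).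
Proof. by move/le_opp; rewrite oppr0. Qed.

Lemma abs_id x : le 0 x -> abs x = x.
Proof.
move=> h; apply: Hanti; last exact: le_abs.
by apply/abs_le; split; [apply: Hrefl | apply: Htrans (oppr_le0 h) h].
Qed.

Lemma pos_id x : le 0 x -> pos x = x.
Proof. by move=> h; apply: Hanti; [apply: join_lub | apply: le_pos]. Qed.

Lemma pos_eq0 x : le x 0 -> pos x = 0.
Proof. by move=> h; apply: Hanti; [apply: join_lub | apply: pos_ge0]. Qed.

Lemma neg_eq0 x : le 0 x -> neg x = 0.
Proof. by move=> h; rewrite neg_pos pos_eq0 //; apply: oppr_le0. Qed.

Lemma pos0_le x : pos x = 0 -> le x 0.
Proof. by move=> h; rewrite -h; apply: le_pos. Qed.

Lemma pos_le x y : le x y -> le 0 y -> le (pos x) y.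
Proof. by move=> h1 h2; apply: join_lub. Qed.

Lemma pos_mono x y : le x y -> le (pos x) (pos y).
Proof. by move=> h; apply: join_le. Qed.

Lemma abs_eq x : abs x = pos x + neg x.
Proof.
rewrite add_join_meet pos_neg_dis addr0; apply: Hanti.
  apply: join_lub; first exact: Htrans (le_pos x) (join_l _ _).
  by rewrite neg_pos; exact: Htrans (le_pos (- x)) (join_r _ _).
apply: join_lub; apply: join_lub.
- exact: le_abs.
- exact: abs_ge0.
- exact: le_absN.
- exact: abs_ge0.
Qed.

Lemma pos_le_abs x : le (pos x) (abs x).
Proof. by rewrite abs_eq; apply: le_addr_ge0; apply: neg_ge0. Qed.

Lemma neg_le_abs x : le (neg x) (abs x).
Proof. by rewrite abs_eq addrC; apply: le_addr_ge0; apply: pos_ge0. Qed.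

Lemma meet_ge0 x y : le 0 x -> le 0 y -> le 0 (meet x y).
Proof. by move=> h1 h2; apply: meet_glb. Qed.

Lemma decomp p q : le 0 p -> le 0 q -> meet p q = 0 ->
  pos (p - q) = p /\ neg (p - q) = q.
Proof.
move=> p0 q0 pq.
have hp : pos (p - q) = p.
  rewrite /pos -(subrr q) -joinD.
  have -> : join p q = p + q by rewrite add_join_meet pq addr0.
  by rewrite addrK.
split=> //; by rewrite neg_eq hp opprB addrCA subrr addr0.
Qed.

Lemma meet0x p : le 0 p -> meet 0 p = 0.
Proof. by move=> h; apply: Hanti; [apply: meet_l | apply: meet_glb]. Qed.

Lemma dis_mono y p q : le 0 y -> le 0 q -> le q p -> meet y p = 0 -> meet y q = 0.
Proof.
move=> y0 q0 qp h; apply: Hanti; last exact: meet_ge0.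
by rewrite -h; apply: meet_le.
Qed.

Lemma dis_add y p q : le 0 y -> le 0 p -> le 0 q -> meet y p = 0 -> meet y q = 0 ->
  meet y (p + q) = 0.
Proof.
move=> y0 p0 q0 h1 h2.
set m := meet y (p + q).
have m0 : le 0 m by apply: meet_ge0 => //; apply: ge0_add.
suff : le (m - meet y p) (meet y q).
  by rewrite h1 h2 subr0 => h; apply: Hanti.
apply: meet_glb.
  apply: Htrans (meet_l y (p + q)); apply: le_subr_ge0; exact: meet_ge0.
rewrite oppr_meet addrC joinD; apply: join_lub.
  apply: Htrans q0; apply: ge0sub; rewrite sub0r opprD opprK.
  by apply: subge0; exact: (meet_l y (p + q)).
apply: ge0sub; rewrite opprD opprK addrA [q + p]addrC; apply: subge0; exact: (meet_r y (p + q)).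
Qed.

Lemma triangle x y : le (abs (x + y)) (abs x + abs y).
Proof.
apply/abs_le; split; first exact: le_add2 (le_abs _) (le_abs _).
by rewrite opprD; apply: le_add2; apply: le_absN.
Qed.

Lemma dis_sum_abs x y w : meet (abs x) (abs y) = 0 -> le (abs x) w -> le (abs y) w ->
  le (abs (x + y)) w.
Proof.
move=> d h1 h2; apply: Htrans (triangle x y) _.
by rewrite add_join_meet d addr0; apply: join_lub.
Qed.


Hypothesis Hassoc : forall x y z, mul x (mul y z) = mul (mul x y) z.
Hypothesis HmulDl : forall x y z, mul (x + y) z = mul x z + mul y z.
Hypothesis HmulDr : forall x y z, mul x (y + z) = mul x y + mul x z.
Hypothesis HmulZl : forall (c : R) x y, mul (c *: x) y = c *: mul x y.
Hypothesis HmulZr : forall (c : R) x y, mul x (c *: y) = c *: mul x y.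
Hypothesis Hmulpos : forall x y, le 0 x -> le 0 y -> le 0 (mul x y).
Hypothesis Hf : forall a b c, meet a b = 0 -> le 0 c ->
  meet (mul a c) b = 0 /\ meet (mul c a) b = 0.
Hypothesis Hsp : forall a, nilpotent mul a -> a = 0.

Lemma mul0l x : mul 0 x = 0.
Proof. by apply: (addrI (mul 0 x)); rewrite -HmulDl !addr0. Qed.
Lemma mul0r x : mul x 0 = 0.
Proof. by apply: (addrI (mul x 0)); rewrite -HmulDr !addr0. Qed.
Lemma mulNl x y : mul (- x) y = - mul x y.
Proof. by apply: (addrI (mul x y)); rewrite -HmulDl !subrr mul0l. Qed.
Lemma mulNr x y : mul x (- y) = - mul x y.
Proof. by apply: (addrI (mul x y)); rewrite -HmulDr !subrr mul0r. Qed.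
Lemma mulBl x y z : mul (x - y) z = mul x z - mul y z.
Proof. by rewrite HmulDl mulNl. Qed.
Lemma mulBr x y z : mul x (y - z) = mul x y - mul x z.
Proof. by rewrite HmulDr mulNr. Qed.

Lemma mul_mono_l c x y : le 0 c -> le x y -> le (mul c x) (mul c y).
Proof. by move=> c0 /subge0 h; apply: ge0sub; rewrite -mulBr; apply: Hmulpos. Qed.
Lemma mul_mono_r c x y : le 0 c -> le x y -> le (mul x c) (mul y c).
Proof. by move=> c0 /subge0 h; apply: ge0sub; rewrite -mulBl; apply: Hmulpos. Qed.

Lemma meet0_ge0l p q : meet p q = 0 -> le 0 p.
Proof. by move=> h; rewrite -h; apply: meet_l. Qed.
Lemma meet0_ge0r p q : meet p q = 0 -> le 0 q.
Proof. by move=> h; rewrite -h; apply: meet_r. Qed.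

Lemma dis_mul p q : meet p q = 0 -> mul p q = 0 /\ mul q p = 0.
Proof.
move=> h; have p0 := meet0_ge0l h; have q0 := meet0_ge0r h.
have [h1 h2] := Hf h q0.
rewrite meetC in h1; rewrite meetC in h2.
split.
  by have [_ ] := Hf h1 p0; rewrite meetxx.
by have [] := Hf h2 p0; rewrite meetxx.
Qed.

Lemma absorb y p c : meet y p = 0 -> le 0 c ->
  meet y (mul c p) = 0 /\ meet y (mul p c) = 0.
Proof.
move=> h c0; rewrite meetC in h; have [h1 h2] := Hf h c0.
by rewrite meetC h2 meetC h1.
Qed.

Lemma mulpos_l c x : le 0 c ->
  pos (mul c x) = mul c (pos x) /\ neg (mul c x) = mul c (neg x).
Proof.
move=> c0.
have e : mul c x = mul c (pos x) - mul c (neg x) by rewrite -mulBr pos_sub_neg.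
have d : meet (mul c (pos x)) (mul c (neg x)) = 0.
  have [h1 _] := absorb (pos_neg_dis x) c0.
  rewrite meetC in h1; have [h2 _] := absorb h1 c0.
  by rewrite meetC.
rewrite e; apply: decomp => //; apply: Hmulpos => //; [apply: pos_ge0 | apply: neg_ge0].
Qed.

Lemma mulpos_r c x : le 0 c ->
  pos (mul x c) = mul (pos x) c /\ neg (mul x c) = mul (neg x) c.
Proof.
move=> c0.
have e : mul x c = mul (pos x) c - mul (neg x) c by rewrite -mulBl pos_sub_neg.
have d : meet (mul (pos x) c) (mul (neg x) c) = 0.
  have [_ h1] := absorb (pos_neg_dis x) c0.
  rewrite meetC in h1; have [_ h2] := absorb h1 c0.
  by rewrite meetC.
rewrite e; apply: decomp => //; apply: Hmulpos => //; [apply: pos_ge0 | apply: neg_ge0].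
Qed.

Lemma abs_mul_r b u : le 0 u -> abs (mul b u) = mul (abs b) u.
Proof.
by move=> u0; have [h1 h2] := mulpos_r b u0; rewrite abs_eq h1 h2 -HmulDl -abs_eq.
Qed.

Lemma abs_mul_l c x : le 0 c -> abs (mul c x) = mul c (abs x).
Proof.
by move=> c0; have [h1 h2] := mulpos_l x c0; rewrite abs_eq h1 h2 -HmulDr -abs_eq.
Qed.

Lemma sq_abs x : mul x x = mul (abs x) (abs x).
Proof.
have [h1 h2] := dis_mul (pos_neg_dis x).
rewrite abs_eq -{1 2}(pos_sub_neg x) !mulBl !mulBr !HmulDl !HmulDr h1 h2.
by rewrite !subr0 !addr0 !add0r ?sub0r opprK.
Qed.

Lemma sq_ge0 x : le 0 (mul x x).
Proof. by rewrite sq_abs; apply: Hmulpos; apply: abs_ge0. Qed.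

Lemma semi_dis p q : le 0 p -> le 0 q -> mul p q = 0 -> meet p q = 0.
Proof.
move=> p0 q0 h; set m := meet p q.
have m0 : le 0 m by apply: meet_ge0.
have mm : le (mul m m) 0.
  rewrite -h; apply: Htrans (mul_mono_r m0 (meet_l p q)) _.
  exact: mul_mono_l p0 (meet_r p q).
apply: Hsp; exists 1%N => /=; apply: Hanti => //; exact: Hmulpos.
Qed.

Lemma ztest z X K : le 0 z -> le 0 (mul z X) -> le (abs X) K ->
  (forall y, le 0 y -> meet y z = 0 -> meet y K = 0) -> le 0 X.
Proof.
move=> z0 zX XK hK.
have [_ h] := mulpos_l X z0.
rewrite neg_eq0 // in h.
have d : meet (neg X) z = 0 by rewrite meetC; apply: semi_dis => //; apply: neg_ge0.
have d2 := hK _ (neg_ge0 X) d.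
have d3 : meet (neg X) (neg X) = 0.
  apply: (dis_mono (neg_ge0 X) (neg_ge0 X) _ d2); exact: Htrans (neg_le_abs X) XK.
rewrite meetxx in d3; rewrite -(pos_sub_neg X) d3 subr0; apply: pos_ge0.
Qed.


Lemma scale_le_cancel (c : R) x y : 0 < c -> le (c *: x) (c *: y) -> le x y.
Proof.
move=> c0 h; have ci : 0 <= c^-1 by rewrite invr_ge0 ltW.
have := le_scale2 ci h.
by rewrite !scalerA mulVf ?scale1r // gt_eqF.
Qed.

Lemma abs0 : abs 0 = 0. Proof. exact: abs_id (Hrefl 0). Qed.

Lemma abs_scale (c : R) x : 0 <= c -> abs (c *: x) = c *: abs x.
Proof.
rewrite le_eqVlt => /orP [/eqP <- | c0]; first by rewrite !scale0r abs0.
apply: Hanti.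
  apply/abs_le; split; first exact: le_scale2 (ltW c0) (le_abs x).
  rewrite -scalerN; exact: le_scale2 (ltW c0) (le_absN x).
have ci : 0 <= c^-1 by rewrite invr_ge0 ltW.
apply: (@scale_le_cancel c^-1); first by rewrite invr_gt0.
rewrite scalerA mulVf ?scale1r ?gt_eqF //.
apply/abs_le; split.
  have := le_abs (c *: x); move/(le_scale2 ci).
  by rewrite scalerA mulVf ?scale1r ?gt_eqF.
have := le_absN (c *: x); move/(le_scale2 ci).
by rewrite scalerN scalerA mulVf ?scale1r ?gt_eqF.
Qed.

Lemma abs_add_le z1 z2 w1 w2 : le (abs z1) w1 -> le (abs z2) w2 ->
  le (abs (z1 + z2)) (w1 + w2).
Proof. by move=> h1 h2; apply: Htrans (triangle _ _) _; apply: le_add2. Qed.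

Lemma pos_sub_pos y c : le 0 c -> pos (y - c) = pos (pos y - c).
Proof.
move=> c0; rewrite /pos joinD add0r; apply: Hanti.
  by apply: join_le; [apply: join_l | apply: Hrefl].
apply: join_lub; last exact: join_r.
apply: join_lub; first exact: join_l.
apply: Htrans (join_r _ _); exact: oppr_le0.
Qed.

Lemma rstep y c : le 0 c ->
  [/\ le 0 (pos y - pos (y - c)), le (pos y - pos (y - c)) c &
      meet (c - (pos y - pos (y - c))) (pos (y - c)) = 0].
Proof.
move=> c0; split.
- apply: subge0; apply: pos_mono; exact: le_subr_ge0.
- apply: ge0sub.
  have -> : c - (pos y - pos (y - c)) = (pos (y - c) + c) - pos y.
    by rewrite opprB addrCA addrA.
  apply: subge0; rewrite /pos joinD subrK add0r.
  by apply: join_le; [apply: Hrefl | exact: c0].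
- have -> : c - (pos y - pos (y - c)) = neg (pos y - c).
    by rewrite neg_eq -pos_sub_pos // !opprB addrCA.
  by rewrite meetC pos_sub_pos // pos_neg_dis.
Qed.


Definition com x y := mul x y - mul y x.

Lemma comDl x y z : com (x + y) z = com x z + com y z.
Proof. by rewrite /com HmulDl HmulDr opprD addrACA. Qed.
Lemma comNl x z : com (- x) z = - com x z.
Proof. by rewrite /com mulNl mulNr opprB opprK addrC. Qed.
Lemma comBl x y z : com (x - y) z = com x z - com y z.
Proof. by rewrite comDl comNl. Qed.
Lemma comZl (c : R) x z : com (c *: x) z = c *: com x z.
Proof. by rewrite /com HmulZl HmulZr scalerBr. Qed.
Lemma comZr (c : R) x z : com x (c *: z) = c *: com x z.
Proof. by rewrite /com HmulZl HmulZr scalerBr. Qed.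
Lemma comxx x : com x x = 0. Proof. exact: subrr. Qed.
Lemma com0l z : com 0 z = 0. Proof. by rewrite /com mul0l mul0r subrr. Qed.

Lemma com_pos_self x : com (pos x) x = 0.
Proof.
have [h1 h2] := dis_mul (pos_neg_dis x).
rewrite /com -{2 3}(pos_sub_neg x) mulBr mulBl h1 h2 !subr0 subrr //.
Qed.

Lemma com_bound x y : le 0 x -> le 0 y -> le (abs (com x y)) (mul x y + mul y x).
Proof.
move=> x0 y0; have xy := Hmulpos x0 y0; have yx := Hmulpos y0 x0.
apply/abs_le; split.
  apply: Htrans (le_subr_ge0 _ yx) _; exact: le_addr_ge0.
rewrite opprB; apply: Htrans (le_subr_ge0 _ xy) _; rewrite addrC.
exact: le_addr_ge0.
Qed.

Lemma absorb_com y s b : le 0 y -> le 0 s -> le 0 b -> meet y s = 0 ->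
  meet y (abs (com s b)) = 0.
Proof.
move=> y0 s0 b0 h.
have [h1 h2] := absorb h b0.
apply: (dis_mono y0 (abs_ge0 _) (com_bound s0 b0)).
apply: dis_add => //; apply: Hmulpos => //.
Qed.


Lemma comDr x y z : com x (y + z) = com x y + com x z.
Proof. by rewrite /com HmulDl HmulDr opprD addrACA. Qed.
Lemma comNr x z : com x (- z) = - com x z.
Proof. by rewrite /com mulNl mulNr opprB opprK addrC. Qed.
Lemma comBr x y z : com x (y - z) = com x y - com x z.
Proof. by rewrite comDr comNr. Qed.

Lemma abs_eq0 z : abs z = 0 -> z = 0.
Proof.
move=> h; apply: Hanti; first by rewrite -h; apply: le_abs.
by apply/le_oppE; rewrite oppr0 -h; apply: le_absN.
Qed.

Hypothesis Harch : forall x y, le 0 x -> (forall n : nat, le (x *+ n) y) -> x = 0.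

Lemma comm_pos a b : le 0 a -> le 0 b -> mul a b = mul b a.
Proof.
move=> a0 b0.
pose W := mul b b + mul b b; pose V := mul a a.
have W0 : le 0 W by apply: ge0_add; apply: sq_ge0.
have V0 : le 0 V by apply: sq_ge0.
suff : abs (com a b) = 0 by move/abs_eq0/eqP; rewrite subr_eq0 => /eqP.
apply: (@Harch _ (W + (1 + 1 : R) *: V) (abs_ge0 _)) => n.
pose N : R := n.+1%:R.
have N1 : 1 <= N by rewrite /N ler1n.
have N0 : 0 < N by apply: lt_le_trans N1.
pose x k := N *: a - k%:R *: b.
pose P k := pos (x k).
pose Q m := com (N *: a - P m) b.
have xS k : x k.+1 = x k - b by rewrite /x mulrSr scalerDl scale1r opprD addrA.
have P0 k : le 0 (P k) by apply: pos_ge0.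
have PS k : le (P k.+1) (P k) by rewrite /P xS; apply: pos_mono; apply: le_subr_ge0.
have rk k : [/\ le 0 (P k - P k.+1), le (P k - P k.+1) b &
    meet (b - (P k - P k.+1)) (P k.+1) = 0] by rewrite /P xS; exact: rstep.
have inv m : le (abs (Q m)) W /\ meet (abs (Q m)) (P m) = 0.
  elim: m => [|m [IH1 IH2]].
    have eP : P 0%N = N *: a.
      rewrite /P /x scale0r subr0 pos_id //; apply: Hscale => //; exact: ltW.
    rewrite /Q eP subrr com0l abs0; split => //.
    by apply: meet0x; apply: Hscale => //; exact: ltW.
  set r := P m - P m.+1.
  have eQ : Q m.+1 = Q m + com r b by rewrite /Q -comDl addrA subrK.
  have [r0 rb rd] := rk m.
  have cr : le (abs (com r b)) W.
    apply: Htrans (com_bound r0 b0) _.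
    by apply: le_add2; [apply: mul_mono_r | apply: mul_mono_l].
  have rle : le r (P m) by apply: le_subr_ge0.
  have d1 : meet (abs (Q m)) (abs (com r b)) = 0.
    apply: (absorb_com (abs_ge0 _) r0 b0).
    exact: (dis_mono (abs_ge0 _) r0 rle IH2).
  split; first by rewrite eQ; exact: dis_sum_abs d1 IH1 cr.
  rewrite meetC eQ; apply: (dis_mono (P0 _) (abs_ge0 _) (triangle (Q m) (com r b))).
  apply: (dis_add (P0 _) (abs_ge0 _) (abs_ge0 _)).
    by rewrite meetC; exact: (dis_mono (abs_ge0 _) (P0 _) (PS m) IH2).
  have s0 : le 0 (b - r) by apply: subge0.
  have -> : com r b = - com (b - r) b by rewrite (comBl b r b) comxx sub0r opprK.
  rewrite absN; apply: (absorb_com (P0 _) s0 b0); by rewrite meetC.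
pose K := (n.+1 ^ 3)%N.
have eK : K%:R = N ^+ 3 by rewrite natrX.
have K0 : 0 < (K%:R : R) by rewrite eK exprn_gt0.
pose p := P K.
have p0 : le 0 p by apply: P0.
have pb : K%:R *: com p b = N *: com p a.
  transitivity (com p (K%:R *: b)); first by rewrite comZr.
  rewrite (_ : K%:R *: b = N *: a - x K); last first.
    by rewrite /x opprB addrCA subrr addr0.
  by rewrite comBr /p /P com_pos_self subr0 comZr.
have pa : le p (N *: a).
  apply: pos_le; last by apply: Hscale => //; exact: ltW.
  apply: le_subr_ge0; apply: Hscale => //.
have cpa : le (abs (com p a)) ((N + N) *: V).
  apply: Htrans (com_bound p0 a0) _; rewrite scalerDl.
  apply: le_add2.
    by rewrite /V -HmulZl; apply: mul_mono_r.
  by rewrite /V -HmulZr; apply: mul_mono_l.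
have main : le (abs ((K%:R * N) *: com a b)) (K%:R *: W + N *: ((N + N) *: V)).
  have -> : (K%:R * N) *: com a b = K%:R *: Q K + N *: com p a.
    rewrite -scalerA -comZl -pb -scalerDr; congr (_ *: _).
    by rewrite /Q -comDl subrK.
  apply: abs_add_le; rewrite abs_scale; try exact: ltW.
    by apply: le_scale2; [exact: ltW | exact: (inv K).1].
  by apply: le_scale2; [exact: ltW | exact: cpa].
have hb : le (K%:R *: (N *: abs (com a b))) (K%:R *: (W + (1 + 1 : R) *: V)).
  rewrite scalerA -abs_scale; last by apply: mulr_ge0; exact: ltW.
  apply: Htrans main _.
  rewrite [X in le _ X]scalerDr; apply: le_add2; first exact: Hrefl.
  rewrite !scalerA; apply: le_scale_r V0.
  rewrite eK; have : 0 <= N - 1 by rewrite subr_ge0.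
  move=> h1; have h2 : 0 <= N by exact: ltW.
  have -> : N ^+ 3 = N * N * N by rewrite !exprS expr0 mulr1 mulrA.
  nra.
have hN := scale_le_cancel K0 hb.
rewrite -scaler_nat; apply: Htrans (le_scale_r _ (abs_ge0 _)) hN.
by rewrite /N ler_nat.
Qed.


Lemma scaleKV (c : R) (x : A) : 0 < c -> c *: (c^-1 *: x) = x.
Proof. by move=> c0; rewrite scalerA divff ?scale1r // gt_eqF. Qed.
Lemma scaleVK (c : R) (x : A) : 0 < c -> c^-1 *: (c *: x) = x.
Proof. by move=> c0; rewrite scalerA mulVf ?scale1r // gt_eqF. Qed.

Lemma meet_scale (c : R) x y : 0 < c -> meet (c *: x) (c *: y) = c *: meet x y.
Proof.
move=> c0; have ci : 0 <= c^-1 by rewrite invr_ge0 ltW.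
apply: Hanti; last first.
  by apply: meet_glb; apply: le_scale2; rewrite ?ltW //; [apply: meet_l | apply: meet_r].
rewrite -[meet (c *: x) _](scaleKV _ c0); apply: le_scale2; first exact: ltW.
apply: meet_glb.
  by apply: Htrans (le_scale2 ci (meet_l _ _)) _; rewrite scaleVK //; exact: Hrefl.
by apply: Htrans (le_scale2 ci (meet_r _ _)) _; rewrite scaleVK //; exact: Hrefl.
Qed.

Lemma dis_scale y x (c : R) : le 0 y -> le 0 x -> 0 <= c -> meet y x = 0 ->
  meet y (c *: x) = 0.
Proof.
move=> y0 x0 c0 h.
have d0 : 0 < 1 + c by apply: lt_le_trans (ltr01 : (0:R) < 1) _; rewrite lerDl.
apply: Hanti; last by apply: meet_ge0 => //; apply: Hscale.
rewrite -(scaler0 _ (1 + c)) -h -meet_scale //.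
apply: meet_le.
  by rewrite -{1}[y]scale1r; apply: le_scale_r => //; rewrite lerDl.
by apply: le_scale_r => //; rewrite lerDr.
Qed.

Lemma ge0_oppr_le a : le 0 a -> le (- a) a.
Proof. by move=> h; apply: Htrans (oppr_le0 h) h. Qed.

Lemma T_reflect h z : le 0 h -> le 0 (z + mul h z) -> le 0 z.
Proof.
move=> h0 hz.
set p := pos z; set q := neg z.
have p0 : le 0 p by apply: pos_ge0.
have q0 : le 0 q by apply: neg_ge0.
have hp0 : le 0 (mul h p) by apply: Hmulpos.
have hq0 : le 0 (mul h q) by apply: Hmulpos.
have d0 : meet p q = 0 by apply: pos_neg_dis.
have d0' : meet q p = 0 by rewrite meetC.
have e : z + mul h z = (p + mul h p) - (q + mul h q).
  rewrite -{1 2}(pos_sub_neg z) mulBr -/p -/q.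
  by rewrite opprD addrACA.
have d : meet (p + mul h p) (q + mul h q) = 0.
  apply: (dis_add (ge0_add p0 hp0) q0 hq0).
    rewrite meetC; apply: (dis_add q0 p0 hp0) => //; exact: (absorb d0' h0).1.
  rewrite meetC; apply: (dis_add hq0 p0 hp0).
    by rewrite meetC; exact: (absorb d0 h0).1.
  have d1 : meet (mul h q) p = 0 by rewrite meetC; exact: (absorb d0 h0).1.
  exact: (absorb d1 h0).1.
have [_ hn] := decomp (ge0_add p0 hp0) (ge0_add q0 hq0) d.
rewrite -e neg_eq0 // in hn.
have qz : q = 0.
  apply: Hanti => //; rewrite hn; exact: le_addr_ge0.
by rewrite -(pos_sub_neg z) -/q qz subr0.
Qed.


Lemma zmod_id1 (a b c : A) (t : R) :
  (t * t) *: c - t *: b + a = (a - t *: b - t *: b + (t * t) *: c) + t *: b.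
Proof.
set u := t *: b; set v := (t * t) *: c.
by rewrite [RHS]addrAC subrK [LHS]addrC addrA [RHS]addrAC.
Qed.

Lemma sq_expand P Q (t : R) : mul Q P = mul P Q ->
  mul (P - t *: Q) (P - t *: Q) =
  mul P P - t *: mul P Q - t *: mul P Q + (t * t) *: mul Q Q.
Proof.
move=> c; rewrite mulBl !mulBr !HmulZl !HmulZr c scalerA.
by rewrite opprD opprK addrA.
Qed.

Lemma poly_pos h e (t : R) : le 0 h -> le 0 e -> 0 <= t ->
  le 0 ((t * t) *: e - t *: mul h e + mul h (mul h e)).
Proof.
move=> h0 e0 t0.
have he0 : le 0 (mul h e) by apply: Hmulpos.
have hhe0 : le 0 (mul h (mul h e)) by apply: Hmulpos.
have tt0 : 0 <= t * t by apply: mulr_ge0.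
apply: (@ztest e _ ((t * t) *: e + t *: mul h e + mul h (mul h e))) => //.
- have ceh : mul e h = mul h e by apply: comm_pos.
  have cPQ : mul e (mul h e) = mul (mul h e) e := comm_pos e0 he0.
  rewrite HmulDr mulBr !HmulZr.
  have -> : mul e (mul h (mul h e)) = mul (mul h e) (mul h e) by rewrite Hassoc ceh.
  rewrite cPQ zmod_id1 -sq_expand; last by rewrite cPQ.
  apply: ge0_add; first exact: sq_ge0.
  by apply: Hscale => //; apply: Hmulpos.
- apply/abs_le; split.
    apply: le_add2; last exact: Hrefl.
    apply: le_add2; first exact: Hrefl.
    by apply: ge0_oppr_le; apply: Hscale.
  rewrite !opprD opprK; apply: le_add2; last exact: ge0_oppr_le.
  apply: le_add2; last exact: Hrefl.
  by apply: ge0_oppr_le; apply: Hscale.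
- move=> y y0 d.
  have d1 : meet y (mul h e) = 0 := (absorb d h0).1.
  have d2 : meet y (mul h (mul h e)) = 0 := (absorb d1 h0).1.
  apply: dis_add => //; first by apply: ge0_add; apply: Hscale.
  apply: dis_add => //; try apply: Hscale => //.
    exact: dis_scale.
  exact: dis_scale.
Qed.


Lemma sub_le0 x y : le (x - y) 0 -> le x y.
Proof. by move/(Hadd y); rewrite subrK add0r. Qed.

Lemma Zlem h e : le 0 h -> le 0 e ->
  (forall y, le 0 y -> le (y + mul h y) e -> y = 0) -> e = 0.
Proof.
move=> h0 e0 H.
apply: (@Harch e (mul h e) e0) => n.
pose N : R := n.+1%:R.
have N0 : 0 < N by rewrite /N ltr0n.
have Ni : 0 <= N^-1 by rewrite invr_ge0 ltW.
have he0 : le 0 (mul h e) by apply: Hmulpos.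
pose w := pos (e - N^-1 *: mul h e).
have w_le : le w e by apply: pos_le => //; apply: le_subr_ge0; apply: Hscale.
have hw : mul h w = pos (mul h e - N^-1 *: mul h (mul h e)).
  by rewrite /w -(mulpos_l _ h0).1 mulBr HmulZr.
have hw_le : le (mul h w) (N *: e).
  rewrite hw; apply: pos_le; last by apply: Hscale => //; exact: ltW.
  apply: ge0sub.
  have := Hscale Ni (poly_pos h0 e0 (ltW N0)).
  congr le.
  rewrite scalerDr scalerBr !scalerA.
  have NN : N^-1 * (N * N) = N by rewrite mulrA mulVf ?mul1r // gt_eqF.
  have NN' : N^-1 * N = 1 by rewrite mulVf // gt_eqF.
  by rewrite NN NN' scale1r opprD opprK addrA.
have Tw : le (w + mul h w) ((1 + N) *: e).
  by rewrite scalerDl scale1r; apply: le_add2.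
have N1 : 0 < 1 + N by rewrite addr_gt0.
pose y := (1 + N)^-1 *: w.
have y0 : le 0 y by apply: Hscale; [rewrite invr_ge0 ltW | apply: pos_ge0].
have Ty : le (y + mul h y) e.
  rewrite /y HmulZr -scalerDr -[X in le _ X](scaleVK e N1).
  apply: le_scale2 => //; rewrite invr_ge0 ltW //.
have w0 : w = 0 by rewrite -(scaleKV w N1) -/y (H y y0 Ty) scaler0.
have ee : le e (N^-1 *: mul h e) by apply: sub_le0; apply: pos0_le.
rewrite -scaler_nat; apply: Htrans (le_scale_r _ e0) _; first last.
  rewrite -[X in le _ X](scaleKV (mul h e) N0); apply: le_scale2 ee; exact: ltW.
by rewrite /N ler_nat.
Qed.


Hypothesis Hdc : forall S : A -> Prop, (exists x, S x) ->
  (exists u, forall x, S x -> le x u) ->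
  exists s, (forall x, S x -> le x s) /\ (forall u, (forall x, S x -> le x u) -> le s u).

Lemma Tlin h x y : (x - y) + mul h (x - y) = (x + mul h x) - (y + mul h y).
Proof. by rewrite mulBr opprD addrACA. Qed.
Lemma TlinD h x y : (x + y) + mul h (x + y) = (x + mul h x) + (y + mul h y).
Proof. by rewrite HmulDr addrACA. Qed.
Lemma Tpos h x : le 0 h -> le 0 x -> le 0 (x + mul h x).
Proof. by move=> h0 x0; apply: ge0_add => //; apply: Hmulpos. Qed.

Lemma le0_anti y : le 0 y -> le y 0 -> y = 0.
Proof. by move=> h1 h2; apply: Hanti. Qed.

Lemma exists_sol h f : le 0 h -> le 0 f -> exists u, le 0 u /\ u + mul h u = f.
Proof.
move=> h0 f0.
pose S x := le 0 x /\ le (x + mul h x) f.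
have S0 : S 0 by split; [exact: Hrefl | rewrite mul0r addr0].
have [s [sub sl]] : exists s, (forall x, S x -> le x s) /\
    (forall u, (forall x, S x -> le x u) -> le s u).
  apply: Hdc; first by exists 0.
  exists f => x [x0 hx]; apply: Htrans hx; apply: le_addr_ge0; exact: Hmulpos.
have s0 : le 0 s := sub 0 S0.
exists s; split => //.
have up : forall y, le 0 y -> (forall x, S x -> le x (s - y)) -> y = 0.
  move=> y y0 hy; apply: le0_anti => //.
  have := sl _ hy; move/subge0; rewrite addrAC subrr add0r.
  by move/le_opp; rewrite oppr0 opprK.
have Ts_le : le (s + mul h s) f.
  apply: sub_le0; apply: pos0_le.
  apply: (Zlem h0 (pos_ge0 _)) => y y0 Ty; apply: up => // x [x0 Tx].
  have hx : le (pos (s + mul h s - f)) ((s - x) + mul h (s - x)).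
    apply: pos_le; last by apply: Tpos => //; apply: subge0; apply: sub.
    by rewrite Tlin; apply: le_addl; apply: le_opp.
  have := Htrans Ty hx; move/subge0; rewrite -Tlin => /(T_reflect h0).
  by rewrite addrAC => /ge0sub.
apply/eqP; rewrite eq_sym -subr_eq0; apply/eqP.
apply: (Zlem h0 (subge0 Ts_le)) => y y0 Ty; apply: up => // x Sx.
have Ssy : S (s + y).
  split; first exact: ge0_add.
  rewrite TlinD; have := le_addl (s + mul h s) Ty.
  by rewrite [X in le _ X]addrCA subrr addr0.
have yle : le y 0.
  by have := sub _ Ssy; move/(Hadd (- s)); rewrite addrC addrA addNr add0r subrr.
apply: Htrans (sub _ Sx) _; apply: le_addr_ge0; exact: oppr_ge0.
Qed.


Lemma zmod_id2 (a b c : A) : c + a - b = (a - b - b + c) + b.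
Proof. by rewrite [RHS]addrAC subrK [c + a]addrC addrAC. Qed.

Lemma amgm G u : le 0 G -> le 0 u -> le (mul G u) (u + mul (mul G G) u).
Proof.
move=> G0 u0.
have Gu0 : le 0 (mul G u) by apply: Hmulpos.
have hu0 : le 0 (mul (mul G G) u) by apply: Hmulpos => //; apply: sq_ge0.
apply: ge0sub.
apply: (@ztest u _ (u + mul (mul G G) u + mul G u)) => //.
- have cuG : mul u G = mul G u by apply: comm_pos.
  have cPQ : mul u (mul G u) = mul (mul G u) u := comm_pos u0 Gu0.
  rewrite mulBr HmulDr -Hassoc.
  have -> : mul u (mul G (mul G u)) = mul (mul G u) (mul G u) by rewrite Hassoc cuG.
  rewrite cPQ zmod_id2.
  have := sq_expand 1 cPQ; rewrite mulr1 !scale1r => <-.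
  apply: ge0_add; first exact: sq_ge0.
  exact: Hmulpos.
- apply/abs_le; split.
    by apply: le_add2; [exact: Hrefl | exact: ge0_oppr_le].
  rewrite opprB; rewrite addrC; apply: le_add2; last exact: Hrefl.
  apply: Htrans (oppr_le0 (ge0_add u0 hu0)) _; exact: ge0_add.
- move=> y y0 d.
  have d1 : meet y (mul G u) = 0 := (absorb d G0).1.
  have d2 : meet y (mul (mul G G) u) = 0 := (absorb d (sq_ge0 G)).1.
  apply: dis_add => //; first exact: ge0_add.
  exact: dis_add.
Qed.

Lemma Bnd h q k : le 0 h -> le 0 q -> le (q + mul h q) k ->
  le (mul k q) (q + mul h q) -> le (mul q q) q.
Proof.
move=> h0 q0 Tq kq.
have q1 : le q (k - mul h q) by apply: ge0sub; rewrite -addrA -opprD [mul h q + q]addrC; apply: subge0.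
have q2 : le (mul q q) (mul k q - mul h (mul q q)).
  by have := mul_mono_r q0 q1; rewrite mulBl Hassoc.
have q3 : le (mul q q + mul h (mul q q)) (q + mul h q).
  apply: Htrans kq; have := Hadd (mul h (mul q q)) q2; by rewrite subrK.
apply: ge0sub; apply: (T_reflect h0); rewrite Tlin; exact: subge0.
Qed.


Lemma solid_pos (B : A -> Prop) : is_subspace B ->
  (forall x y, B x -> B y -> B (mul x y)) ->
  (forall a, bounded_elt mul le join a -> B a) ->
  forall b f, B b -> le 0 f -> le f (abs b) -> B f.
Proof.
move=> [B0 [BD BZ]] BM Bb b f bB f0 fb.
set G := abs b; set h := mul b b.
have G0 : le 0 G by apply: abs_ge0.
have hG : h = mul G G by rewrite /h sq_abs.
have h0 : le 0 h by apply: sq_ge0.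
have [u [u0 Tu]] := exists_sol h0 f0.
have bu : bounded_elt mul le join u.
  exists 1; split; first exact: ltr01.
  rewrite scale1r abs_id //.
  apply: (Bnd h0 u0 (k := G)); first by rewrite Tu.
  by rewrite hG; apply: amgm.
have bv : bounded_elt mul le join (mul b u).
  exists 1; split; first exact: ltr01.
  rewrite scale1r sq_abs abs_mul_r //.
  have q0 : le 0 (mul G u) by apply: Hmulpos.
  apply: (Bnd h0 q0 (k := h)).
    have -> : mul G u + mul h (mul G u) = mul G (u + mul h u).
      by rewrite HmulDr hG !Hassoc.
    by rewrite Tu hG; apply: mul_mono_l.
  by rewrite addrC; apply: le_addr_ge0.
have -> : f = u + mul b (mul b u) by rewrite Hassoc -Tu.
apply: BD; first exact: Bb.
apply: BM => //; exact: Bb.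
Qed.

Lemma solid (B : A -> Prop) : is_subspace B ->
  (forall x y, B x -> B y -> B (mul x y)) ->
  (forall a, bounded_elt mul le join a -> B a) ->
  forall a b, B b -> le (abs a) (abs b) -> B a.
Proof.
move=> hs BM Bb a b bB ab.
have [B0 [BD BZ]] := hs.
rewrite -(pos_sub_neg a) -scaleN1r.
apply: BD.
  apply: (solid_pos hs BM Bb bB (pos_ge0 a)); exact: Htrans (pos_le_abs a) ab.
apply: BZ; apply: (solid_pos hs BM Bb bB (neg_ge0 a)); exact: Htrans (neg_le_abs a) ab.
Qed.


Lemma final (B : A -> Prop) : intermediate_algebra mul le join B ->
  order_ideal le join B /\ is_f_algebra mul le meet join B /\
  semiprime mul B /\ dedekind_complete le B.
Proof.
move=> [[hs BM] Bb].
have [B0 [BD BZ]] := hs.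
have sol := solid hs BM Bb.
have Babs x : B x -> B (abs x).
  move=> Bx; apply: (sol _ x Bx); rewrite abs_id; [exact: Hrefl | exact: abs_ge0].
have Bsum x y : B x -> B y -> B (abs x + abs y) by move=> *; apply: BD; apply: Babs.
have sum0 x y : le 0 (abs x + abs y) by apply: ge0_add; apply: abs_ge0.
have lex x y : le x (abs x + abs y).
  by apply: Htrans (le_abs x) _; apply: le_addr_ge0; apply: abs_ge0.
have ley x y : le y (abs x + abs y).
  by apply: Htrans (le_abs y) _; rewrite addrC; apply: le_addr_ge0; apply: abs_ge0.
have lenx x y : le (- x) (abs x + abs y).
  by apply: Htrans (le_absN x) _; apply: le_addr_ge0; apply: abs_ge0.
have leny x y : le (- y) (abs x + abs y).
  by apply: Htrans (le_absN y) _; rewrite addrC; apply: le_addr_ge0; apply: abs_ge0.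
have Bmeet x y : B x -> B y -> B (meet x y).
  move=> Bx By; apply: (sol _ _ (Bsum x y Bx By)); rewrite (abs_id (sum0 x y)).
  apply/abs_le; split; first exact: Htrans (meet_l x y) (lex x y).
  by rewrite oppr_meet; apply: join_lub.
have Bjoin x y : B x -> B y -> B (join x y).
  move=> Bx By; apply: (sol _ _ (Bsum x y Bx By)); rewrite (abs_id (sum0 x y)).
  apply/abs_le; split; first by apply: join_lub.
  by rewrite oppr_join; apply: Htrans (meet_l _ _) (lenx x y).
split; first by split => // a b Bb' ab; exact: sol ab.
split.
  split.
    split; first exact: hs.
    split; first exact: BM.
    split; first by move=> x y z _ _ _; exact: Hassoc.
    split; first by move=> x y z _ _ _; exact: HmulDl.
    split; first by move=> x y z _ _ _; exact: HmulDr.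
    split; first by move=> c x y _ _; exact: HmulZl.
    by move=> c x y _ _; exact: HmulZr.
  split.
    split.
      split; first exact: hs.
      split; first by move=> x _; exact: Hrefl.
      split; first by move=> x y _ _; exact: Hanti.
      split; first by move=> x y z _ _ _; exact: Htrans.
      split; first by move=> x y z _ _ _; exact: Hadd.
      by move=> c x _; exact: Hscale.
    split.
      move=> x y Bx By; split; first exact: Bmeet.
      by split; [exact: meet_l | split; [exact: meet_r | move=> z _; exact: meet_glb]].
    move=> x y Bx By; split; first exact: Bjoin.
    by split; [exact: join_l | split; [exact: join_r | move=> z _; exact: join_lub]].
  split; first by move=> x y _ _; exact: Hmulpos.
  by move=> a b c _ _ _; exact: Hf.
split; first by move=> a _; exact: Hsp.
move=> S SB [x0 Sx0] [u [Bu ub]].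
have [s [s1 s2]] := Hdc (ex_intro _ x0 Sx0) (ex_intro _ u ub).
have Bs : B s.
  apply: (sol _ _ (Bsum x0 u (SB _ Sx0) Bu)); rewrite (abs_id (sum0 x0 u)).
  apply/abs_le; split.
    exact: Htrans (s2 u ub) (ley x0 u).
  apply: Htrans (le_opp (s1 _ Sx0)) (lenx x0 u).
exists s; split; first by split.
by move=> v [_ hv]; apply: s2.
Qed.

End Main.

Theorem corollary10 (R : realType) (A : lmodType R)
  (mul : A -> A -> A) (le : A -> A -> Prop) (meet join : A -> A -> A) :
  is_f_algebra mul le meet join full ->
  archimedean le full ->
  semiprime mul full ->
  dedekind_complete le full ->
  forall B : A -> Prop, intermediate_algebra mul le join B ->
    order_ideal le join B /\
    is_f_algebra mul le meet join B /\
    semiprime mul B /\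
    dedekind_complete le B.
Proof.
move=> [[_ [_ [hA [hDl [hDr [hZl hZr]]]]]]
  [[[_ [hrefl [hanti [htrans [hadd hsc]]]]] [hm hj]] [hpos hf]]] harch hsp hdc B hB.
apply: (final _ _ _ _ _ _ _ _ _ _ _ _ _ _ _ _ _ hB).
- by move=> x; apply: hrefl.
- by move=> x y; apply: hanti.
- by move=> x y z; apply: htrans.
- by move=> x y z; apply: hadd.
- by move=> c x; apply: hsc.
- by move=> x y; have [_ [h1 [h2 h3]]] := hm x y I I; split=> //; split=> // z; apply: h3.
- by move=> x y; have [_ [h1 [h2 h3]]] := hj x y I I; split=> //; split=> // z; apply: h3.
- by move=> x y z; apply: hA.
- by move=> x y z; apply: hDl.
- by move=> x y z; apply: hDr.
- by move=> c x y; apply: hZl.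
- by move=> c x y; apply: hZr.
- by move=> x y; apply: hpos.
- by move=> a b c; apply: hf.
- by move=> a; apply: hsp.
- by move=> x y; apply: harch.
- move=> S [x Sx] [u hu].
  have [s [[_ s1] s2]] := hdc S (fun _ _ => I) (ex_intro _ x Sx) (ex_intro _ u (conj I hu)).
  exists s; split=> // v hv; apply: s2; split=> //.
Qed.
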